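(* Let $a,b,c\in\mathbb F$ and $d\in\mathbb N$. If the $\Re$-module $R_d(a,b,c)$ is irreducible, then it is isomorphic to each of $R_d(-a-1,b,c)$, $R_d(a,-b-1,c)$ and $R_d(a,b,-c-1)$.
   Context: $\mathbb F$ is algebraically closed with $\operatorname{char}\mathbb F\ne2$. The Racah algebra $\Re$ is the unital associative $\mathbb F$-algebra with generators $A,B,C,D$ and relations $[A,B]=[B,C]=[C,A]=2D$ together with the requirement that each of $\alpha:=[A,D]+AC-BA$, $\beta:=[B,D]+BA-CB$, $\gamma:=[C,D]+CB-AC$ is central in $\Re$; $\delta:=A+B+C$. For $a,b,c\in\mathbb F$ and $d\in\mathbb N$ set $\theta_i=(a+\tfrac d2-i)(a+\tfrac d2-i+1)$, $\theta_i^*=(b+\tfrac d2-i)(b+\tfrac d2-i+1)$, $\varphi_i=i(i-d-1)(a+b+c+\tfrac d2-i+2)(a+b-c+\tfrac d2-i+1)$. $R_d(a,b,c)$ denotes the $(d+1)$-dimensional $\Re$-module with a basis $v_0,\dots,v_d$ such that $Av_i=\theta_iv_i+v_{i+1}$ ($v_{d+1}=0$), $Bv_i=\theta_i^*v_i+\varphi_iv_{i-1}$ ($v_{-1}=0$), and $\alpha,\beta,\delta$ act as the scalars $(c-b)(c+b+1)(a-\tfrac d2)(a+\tfrac d2+1)$, $(a-c)(a+c+1)(b-\tfrac d2)(b+\tfrac d2+1)$, $\tfrac d2(\tfrac d2+1)+a(a+1)+b(b+1)+c(c+1)$ respectively (exists, unique up to isomorphism). *)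

(* Defs.v *)
From HB Require Import structures.
From mathcomp Require Import all_boot all_order all_algebra.
Set Implicit Arguments. Unset Strict Implicit. Unset Printing Implicit Defensive.
Import GRing.Theory.
Local Open Scope ring_scope.

(* Convention: matrices act on COLUMN vectors, i.e. the image of the
   basis vector v_j under X is the j-th column of X (X i j = coefficient
   of v_i in X v_j). Hence products of algebra elements correspond to
   products of matrices in the same order. *)
Record racah_rep (F : fieldType) (n : nat) := RacahRep {
  rA : 'M[F]_n; rB : 'M[F]_n; rC : 'M[F]_n; rD : 'M[F]_n }.

Definition mcomm (F : fieldType) n (X Y : 'M[F]_n) := X *m Y - Y *m X.

Definition is_racah_module (F : fieldType) n (M : racah_rep F n) : Prop :=
  let A := rA M in let B := rB M in let C := rC M in let D := rD M in
  let al := mcomm A D + A *m C - B *m A in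
  let be := mcomm B D + B *m A - C *m B in
  let ga := mcomm C D + C *m B - A *m C in
  [/\ mcomm A B = 2%:R *: D, mcomm B C = 2%:R *: D, mcomm C A = 2%:R *: D &
      forall Z, Z \in [:: al; be; ga] ->
        forall X, X \in [:: A; B; C; D] -> Z *m X = X *m Z].

Definition racah_iso (F : fieldType) n (M N : racah_rep F n) : Prop :=
  exists P : 'M[F]_n, P \in unitmx /\
    [/\ P *m rA M = rA N *m P, P *m rB M = rB N *m P,
        P *m rC M = rC N *m P & P *m rD M = rD N *m P].

(* A subspace W of column vectors is encoded by a matrix U whose rows span
   W^T; X W ⊆ W iff (U *m X^T <= U)%MS. *)
Definition racah_stable (F : fieldType) n (M : racah_rep F n) (U : 'M[F]_n) :=
  [/\ (U *m (rA M)^T <= U)%MS, (U *m (rB M)^T <= U)%MS,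
      (U *m (rC M)^T <= U)%MS & (U *m (rD M)^T <= U)%MS].

Definition racah_irreducible (F : fieldType) n (M : racah_rep F n) : Prop :=
  (0 < n)%N /\
  forall U : 'M[F]_n, racah_stable M U -> \rank U = 0%N \/ row_full U.

Section Rd.
Variables (F : fieldType) (a b c : F) (d : nat).

Definition half : F := 2%:R^-1.
Definition hd : F := d%:R * half.

Definition theta (i : nat) : F := (a + hd - i%:R) * (a + hd - i%:R + 1).
Definition thetas (i : nat) : F := (b + hd - i%:R) * (b + hd - i%:R + 1).
Definition phi (i : nat) : F :=
  i%:R * (i%:R - d%:R - 1) * (a + b + c + hd - i%:R + 2)
       * (a + b - c + hd - i%:R + 1).

(* scalar by which delta = A + B + C acts *)
Definition delta_sc : F := hd * (hd + 1) + a * (a + 1) + b * (b + 1) + c * (c + 1).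

(* A v_j = theta_j v_j + v_{j+1};  B v_j = theta*_j v_j + phi_j v_{j-1} *)
Definition RdA : 'M[F]_d.+1 :=
  \matrix_(i, j) ((if i == j :> nat then theta j else 0)
                  + (if i == j.+1 :> nat then 1 else 0)).
Definition RdB : 'M[F]_d.+1 :=
  \matrix_(i, j) ((if i == j :> nat then thetas j else 0)
                  + (if i.+1 == j :> nat then phi j else 0)).
Definition RdC : 'M[F]_d.+1 := delta_sc%:M - RdA - RdB.
Definition RdD : 'M[F]_d.+1 := half *: mcomm RdA RdB.

Definition Rd : racah_rep F d.+1 := RacahRep RdA RdB RdC RdD.
End Rd.

(* Main.v *)
Require Import Defs.
From HB Require Import structures.
From mathcomp Require Import all_boot all_order all_algebra.
From mathcomp Require Import ring zify.
Import GRing.Theory.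
Local Open Scope ring_scope.

Module Aux.
Set Implicit Arguments. Unset Strict Implicit. Unset Printing Implicit Defensive.

Section Gen.
Variable F : fieldType.
Variable n : nat.

Definition relR (X Y : 'M[F]_n.+1) (ka de : F) (v : 'cV[F]_n.+1) : Prop :=
  X *m (X *m (Y *m v)) - 2%:R *: (X *m (Y *m (X *m v))) + Y *m (X *m (X *m v))
  - 2%:R *: (X *m (Y *m v)) - 2%:R *: (Y *m (X *m v))
  = (2%:R * ka) *: v - (2%:R * de) *: (X *m v) + 2%:R *: (X *m (X *m v)).

Lemma scalemxAR m p (a : F) (A : 'M[F]_(m, n.+1)) (B : 'M[F]_(n.+1, p)) : A *m (a *: B) = a *: (A *m B).
Proof. by rewrite scalemxAr. Qed.

Lemma lin_solve (x y p q z : F) : p = q -> x - y = (p - q) - z -> z = 0 -> x = y.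
Proof. move=> hpq e hz; apply/eqP; rewrite -subr_eq0 e hpq hz; apply/eqP; ring. Qed.

Lemma verma_step (X Y : 'M[F]_n.+1) (ka de : F) (w0 w1 w2 w3 : 'cV[F]_n.+1)
  (l0 l1 l2 m1 m2 m3 f1 f2 f3 : F) :
  (forall v, relR X Y ka de v) ->
  (f1 = 0 \/ X *m w0 = l0 *: w0 + w1) ->
  X *m w1 = l1 *: w1 + w2 -> X *m w2 = l2 *: w2 + w3 ->
  Y *m w1 = m1 *: w1 + f1 *: w0 -> Y *m w2 = m2 *: w2 + f2 *: w1 ->
  m1 - 2%:R * m2 + m3 - 2%:R = 0 ->
  m1 * (l1 + l2) + f1 - 2%:R * (l1 * m1 + m2 * l2 + f2) + (l1 + l2) * m2 + f3
    - 2%:R * m1 - 2%:R * m2 + 2%:R * de - 2%:R * (l1 + l2) = 0 ->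
  f1 * (l0 - l1 - 2%:R) + f2 * (l2 - l1 - 2%:R) - 4%:R * m1 * l1 - 2%:R * ka
    + 2%:R * de * l1 - 2%:R * l1 ^+ 2 = 0 ->
  f1 * ((l0 - l1) ^+ 2 - 2%:R * (l0 + l1)) = 0 ->
  Y *m w3 = m3 *: w3 + f3 *: w2.
Proof.
move=> hR hX0 hX1 hX2 hY1 hY2 hT hS hQ hP.
have E := hR w1; rewrite /relR in E.
have [u Hu] : exists u, Y *m w3 = u by eexists.
case: hX0 => [f10|hX0].
- rewrite f10 scale0r addr0 in hY1.
  rewrite ?(mulmxDr, scalemxAR, hX1, hX2, hY1, hY2, Hu) in E.
  rewrite Hu; apply/matrixP => r s; rewrite (ord1 s).
  have Er := congr1 (fun M : 'cV_n.+1 => M r 0) E; rewrite /= !mxE in Er.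
  rewrite !mxE.
  apply: (@lin_solve _ _ _ _ ((m1 - 2%:R * m2 + m3 - 2%:R) * w3 r 0 + (m1 * (l1 + l2) + f1 - 2%:R * (l1 * m1 + m2 * l2 + f2) + (l1 + l2) * m2 + f3
    - 2%:R * m1 - 2%:R * m2 + 2%:R * de - 2%:R * (l1 + l2)) * w2 r 0 + (f1 * (l0 - l1 - 2%:R) + f2 * (l2 - l1 - 2%:R) - 4%:R * m1 * l1 - 2%:R * ka
    + 2%:R * de * l1 - 2%:R * l1 ^+ 2) * w1 r 0 + (f1 * ((l0 - l1) ^+ 2 - 2%:R * (l0 + l1))) * w0 r 0) Er).
  + rewrite f10; ring.
  + by rewrite hT hS hQ hP; ring.
- rewrite ?(mulmxDr, scalemxAR, hX0, hX1, hX2, hY1, hY2, Hu) in E.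
  rewrite Hu; apply/matrixP => r s; rewrite (ord1 s).
  have Er := congr1 (fun M : 'cV_n.+1 => M r 0) E; rewrite /= !mxE in Er.
  rewrite !mxE.
  apply: (@lin_solve _ _ _ _ ((m1 - 2%:R * m2 + m3 - 2%:R) * w3 r 0 + (m1 * (l1 + l2) + f1 - 2%:R * (l1 * m1 + m2 * l2 + f2) + (l1 + l2) * m2 + f3
    - 2%:R * m1 - 2%:R * m2 + 2%:R * de - 2%:R * (l1 + l2)) * w2 r 0 + (f1 * (l0 - l1 - 2%:R) + f2 * (l2 - l1 - 2%:R) - 4%:R * m1 * l1 - 2%:R * ka
    + 2%:R * de * l1 - 2%:R * l1 ^+ 2) * w1 r 0 + (f1 * ((l0 - l1) ^+ 2 - 2%:R * (l0 + l1))) * w0 r 0) Er).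
  + ring.
  + by rewrite hT hS hQ hP; ring.
Qed.

Section Verma.
Variables (X Y : 'M[F]_n.+1) (lam mu ph : nat -> F) (ka de : F) (w : 'cV[F]_n.+1).

Fixpoint W (i : nat) : 'cV[F]_n.+1 :=
  match i with 0 => w | i'.+1 => X *m W i' - lam i' *: W i' end.

Lemma WX i : X *m W i = lam i *: W i + W i.+1.
Proof. by rewrite /= addrC subrK. Qed.

Hypothesis hR : forall v, relR X Y ka de v.
Hypothesis h0 : Y *m w = mu 0 *: w.
Hypothesis h1 : Y *m W 1 = mu 1 *: W 1 + ph 1 *: w.
Hypothesis ph0 : ph 0 = 0.
Hypothesis hT : forall k, mu k - 2%:R * mu k.+1 + mu k.+2 - 2%:R = 0.
Hypothesis hS : forall k, mu k * (lam k + lam k.+1) + ph k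
   - 2%:R * (lam k * mu k + mu k.+1 * lam k.+1 + ph k.+1) + (lam k + lam k.+1) * mu k.+1
   + ph k.+2 - 2%:R * mu k - 2%:R * mu k.+1 + 2%:R * de - 2%:R * (lam k + lam k.+1) = 0.
Hypothesis hQ : forall k, ph k * (lam k.-1 - lam k - 2%:R) + ph k.+1 * (lam k.+1 - lam k - 2%:R)
   - 4%:R * mu k * lam k - 2%:R * ka + 2%:R * de * lam k - 2%:R * lam k ^+ 2 = 0.
Hypothesis hP : forall k, ph k * ((lam k.-1 - lam k) ^+ 2 - 2%:R * (lam k.-1 + lam k)) = 0.

Lemma verma i : Y *m W i = mu i *: W i + ph i *: W i.-1.
Proof.
suff H : forall k, Y *m W k = mu k *: W k + ph k *: W k.-1 /\
                   Y *m W k.+1 = mu k.+1 *: W k.+1 + ph k.+1 *: W k by case: (H i).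
elim=> [|k [IH1 IH2]].
  by split=> //; rewrite /= ph0 scale0r addr0.
split=> //.
apply: (@verma_step X Y ka de (W k.-1) (W k) (W k.+1) (W k.+2)
          (lam k.-1) (lam k) (lam k.+1) (mu k) (mu k.+1) (mu k.+2)
          (ph k) (ph k.+1) (ph k.+2)) => //; try exact: WX.
case: k {IH1 IH2} => [|k]; first by left.
by right; exact: WX.
Qed.
End Verma.

Definition ev (j : nat) : 'cV[F]_n.+1 := \col_i ((i : nat) == j)%:R.

Lemma evE j i : ev j i 0 = ((i : nat) == j)%:R.
Proof. by rewrite mxE. Qed.

Lemma ev_out j : (n.+1 <= j)%N -> ev j = 0.
Proof.
move=> h; apply/matrixP => i k; rewrite !mxE.
by rewrite ltn_eqF // (leq_trans (ltn_ord i) h).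
Qed.

Lemma mul_ev (M : 'M[F]_n.+1) j i :
  (M *m ev j) i 0 = if (j < n.+1)%N then M i (inord j) else 0.
Proof.
rewrite mxE; case: ltnP => h.
  rewrite (bigD1 (inord j)) //= big1 ?addr0.
    by rewrite evE inordK // eqxx mulr1.
  move=> k hk; rewrite evE; case: eqP => [e|]; last by rewrite mulr0.
  by case/eqP: hk; apply: val_inj; rewrite /= inordK // -e.
rewrite big1 // => k _; rewrite evE ltn_eqF ?mulr0 //.
exact: leq_trans (ltn_ord k) h.
Qed.

Lemma colext (M N : 'M[F]_n.+1) :
  (forall j, (j < n.+1)%N -> M *m ev j = N *m ev j) -> M = N.
Proof.
move=> H; apply/matrixP => r s.
have := congr1 (fun v : 'cV_n.+1 => v r 0) (H s (ltn_ord s)).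
by rewrite !mul_ev ltn_ord inord_val.
Qed.

Definition lowmx (lam : nat -> F) : 'M[F]_n.+1 :=
  \matrix_(i, j) ((if i == j :> nat then lam j else 0)
                  + (if i == j.+1 :> nat then 1 else 0)).
Definition upmx (mu ph : nat -> F) : 'M[F]_n.+1 :=
  \matrix_(i, j) ((if i == j :> nat then mu j else 0)
                  + (if i.+1 == j :> nat then ph j else 0)).

Lemma lowmx_ev lam j : lowmx lam *m ev j = lam j *: ev j + ev j.+1.
Proof.
apply/matrixP => i k; rewrite (ord1 k) mul_ev !mxE.
case: ltnP => h.
  rewrite inordK //.
  by case: eqP => _; case: eqP => _; rewrite ?mulr0 ?mulr1 ?addr0 ?add0r.
have h1 : (i : nat) == j = false by rewrite ltn_eqF // (leq_trans (ltn_ord i) h).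
have h2 : (i : nat) == j.+1 = false.
  by rewrite ltn_eqF // ltnS (leq_trans (ltnW (ltn_ord i)) h).
by rewrite h1 h2 mulr0 addr0.
Qed.

Lemma upmx_ev mu ph j : ph 0 = 0 -> ph n.+1 = 0 ->
  upmx mu ph *m ev j = mu j *: ev j + ph j *: ev j.-1.
Proof.
move=> p0 pn; apply/matrixP => i k; rewrite (ord1 k) mul_ev !mxE.
case: ltnP => h.
  rewrite inordK //.
  case: j h => [|j] h /=.
    by rewrite p0 mul0r ?if_same addr0; case: eqP; rewrite ?mulr0 ?mulr1 ?addr0.
  rewrite eqSS.
  by case: eqP => _; case: eqP => _; rewrite ?mulr0 ?mulr1 ?addr0 ?add0r.
have h1 : (i : nat) == j = false by rewrite ltn_eqF // (leq_trans (ltn_ord i) h).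
rewrite h1 mulr0 add0r.
case: (ltngtP j n.+1) h => // [hlt|->] _.
  rewrite ltn_eqF ?mulr0 //.
  by case: j hlt {h1} => // j hlt; rewrite /= (leq_trans (ltn_ord i)).
by rewrite pn mul0r.
Qed.

Lemma sub_subB m1 m2 (A B : 'M[F]_(m1, n.+1)) (C : 'M[F]_(m2, n.+1)) :
  (A <= C)%MS -> (B <= C)%MS -> (A - B <= C)%MS.
Proof. by move=> hA hB; rewrite -scaleN1r addmx_sub // scalemx_sub. Qed.

Section Qmx.
Variables (X : 'M[F]_n.+1) (lam : nat -> F) (w : 'cV[F]_n.+1).
Definition Qm : 'M[F]_n.+1 := \matrix_(i, j) (W X lam w j i 0).

Lemma Qm_ev j : Qm *m ev j = if (j < n.+1)%N then W X lam w j else 0.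
Proof.
case: ltnP => h; apply/matrixP => i k; rewrite (ord1 k) mul_ev.
  by rewrite h mxE inordK.
by rewrite ltnNge h /= !mxE.
Qed.

Lemma W_horner i :
  W X lam w i = horner_mx X (\prod_(k < i) ('X - (lam k)%:P)) *m w.
Proof.
elim: i => [|i IH] /=.
  by rewrite big_ord0 rmorph1 mul1mx.
rewrite big_ord_recr /= mulrC rmorphM rmorphB /= horner_mx_X horner_mx_C.
by rewrite -mulmxE -mulmxA -IH mulmxBl mul_scalar_mx.
Qed.

Lemma W_last : char_poly X = \prod_(k < n.+1) ('X - (lam k)%:P) ->
  W X lam w n.+1 = 0.
Proof. by move=> h; rewrite W_horner -h Cayley_Hamilton mul0mx. Qed.

Lemma Qm_low : W X lam w n.+1 = 0 -> Qm *m lowmx lam = X *m Qm.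
Proof.
move=> hl; apply: colext => j hj.
rewrite -!mulmxA lowmx_ev mulmxDr -scalemxAr !Qm_ev hj WX.
case: ltnP => h //; have e : j.+1 = n.+1 by apply/eqP; rewrite eqn_leq h hj.
by rewrite e hl addr0.
Qed.

Lemma Qm_up (Y : 'M[F]_n.+1) mu ph :
  ph 0 = 0 -> ph n.+1 = 0 ->
  (forall i, Y *m W X lam w i = mu i *: W X lam w i + ph i *: W X lam w i.-1) ->
  Qm *m upmx mu ph = Y *m Qm.
Proof.
move=> p0 pn hY; apply: colext => j hj.
rewrite -!mulmxA upmx_ev // mulmxDr -!scalemxAr !Qm_ev hj hY.
by rewrite (leq_ltn_trans (leq_pred j) hj).
Qed.

Lemma Qm_nz : w != 0 -> Qm != 0.
Proof.
apply: contraNneq => h; have := Qm_ev 0; rewrite h mul0mx /= => <-.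
by [].
Qed.
End Qmx.

Lemma char_poly_tr (M : 'M[F]_n.+1) : char_poly M^T = char_poly M.
Proof.
rewrite /char_poly /char_poly_mx -det_tr; congr (\det _).
by rewrite linearB /= tr_scalar_mx -map_trmx trmxK.
Qed.

Lemma char_low lam : char_poly (lowmx lam) = \prod_(i < n.+1) ('X - (lam i)%:P).
Proof.
rewrite char_poly_trig; last first.
  apply/is_trig_mxP => i j hij; rewrite mxE.
  by rewrite ltn_eqF // ltn_eqF ?addr0 // ltnW.
by apply: eq_bigr => i _; rewrite mxE eqxx eqn_leq ltnn andbF addr0.
Qed.

Lemma char_up mu ph : char_poly (upmx mu ph) = \prod_(i < n.+1) ('X - (mu i)%:P).
Proof.
rewrite -char_poly_tr char_poly_trig; last first.
  apply/is_trig_mxP => i j hij; rewrite !mxE.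
  by rewrite gtn_eqF // gtn_eqF ?addr0 // ltnS ltnW.
by apply: eq_bigr => i _; rewrite !mxE eqxx gtn_eqF ?addr0.
Qed.

Lemma prod_rev (f g : nat -> F) :
  (forall i, (i < n.+1)%N -> f i = g (n - i)%N) ->
  \prod_(i < n.+1) ('X - (f i)%:P) = \prod_(i < n.+1) ('X - (g i)%:P).
Proof.
move=> h; rewrite (reindex_inj rev_ord_inj) /=.
apply: eq_bigr => i _; rewrite h /=.
  by rewrite subSS subKn // -ltnS.
by rewrite subSS ltnS leq_subr.
Qed.
End Gen.

Section Inst.
Variable F : fieldType.
Hypothesis h2 : (2%:R : F) != 0.

Lemma relR_of_ev n (X Y : 'M[F]_n.+1) ka de :
  (forall j, (j < n.+1)%N -> relR X Y ka de (ev F n j)) -> forall v, relR X Y ka de v.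
Proof.
move=> H.
set L := X *m X *m Y - 2%:R *: (X *m Y *m X) + Y *m X *m X - 2%:R *: (X *m Y)
   - 2%:R *: (Y *m X).
set Rm := (2%:R * ka)%:M - (2%:R * de) *: X + 2%:R *: (X *m X).
have eL : forall v : 'cV[F]_n.+1, L *m v = X *m (X *m (Y *m v)) - 2%:R *: (X *m (Y *m (X *m v)))
   + Y *m (X *m (X *m v)) - 2%:R *: (X *m (Y *m v)) - 2%:R *: (Y *m (X *m v)).
  by move=> v; rewrite /L !mulmxBl !mulmxDl ?mulNmx -!scalemxAl !mulmxA.
have eR : forall v : 'cV[F]_n.+1, Rm *m v = (2%:R * ka) *: v - (2%:R * de) *: (X *m v)
   + 2%:R *: (X *m (X *m v)).
  by move=> v; rewrite /Rm ?mulmxDl ?mulmxBl ?mulNmx mul_scalar_mx -!scalemxAl !mulmxA.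
have LR : L = Rm by apply: colext => j hj; rewrite eL eR; exact: H.
by move=> v; rewrite /relR -eL -eR LR.
Qed.

Definition alpha (a b c : F) d :=
  (c - b) * (c + b + 1) * (a - hd F d) * (a + hd F d + 1).
Definition beta (a b c : F) d :=
  (a - c) * (a + c + 1) * (b - hd F d) * (b + hd F d + 1).

Lemma RdA_low (a : F) d : RdA a d = lowmx d (theta a d). Proof. by []. Qed.
Lemma RdB_up (a b c : F) d : RdB a b c d = upmx d (thetas b d) (phi a b c d).
Proof. by []. Qed.

Lemma phi0 (a b c : F) d : phi a b c d 0 = 0.
Proof. by rewrite /phi (_ : 0%:R = 0) // !mul0r. Qed.
Lemma phiS (a b c : F) d : phi a b c d d.+1 = 0.
Proof.
by rewrite /phi (_ : (d.+1)%:R - d%:R - 1 = 0 :> F) ?mulr0 ?mul0r //; ring.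
Qed.

Lemma relA (a b c : F) d v :
  relR (RdA a d) (RdB a b c d) (alpha a b c d) (delta_sc a b c d) v.
Proof.
apply: relR_of_ev => j _; rewrite /relR RdA_low RdB_up.
rewrite ?(mulmxDr, scalemxAR, lowmx_ev, upmx_ev _ _ (phi0 a b c d) (phiS a b c d)).
apply/matrixP => r s; rewrite !mxE.
case: j => [|j] /=.
  rewrite [phi _ _ _ _ 0]phi0.
  rewrite /alpha /delta_sc /theta /thetas /phi /hd /Defs.half.
  by field.
rewrite /alpha /delta_sc /theta /thetas /phi /hd /Defs.half.
by field.
Qed.

Lemma relB (a b c : F) d v :
  relR (RdB a b c d) (RdA a d) (- beta a b c d) (delta_sc a b c d) v.
Proof.
apply: relR_of_ev => j _; rewrite /relR RdA_low RdB_up.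
rewrite ?(mulmxDr, scalemxAR, lowmx_ev, upmx_ev _ _ (phi0 a b c d) (phiS a b c d)).
apply/matrixP => r s; rewrite !mxE.
case: j => [|[|j]] /=; rewrite ?[phi _ _ _ _ 0]phi0;
  rewrite /beta /delta_sc /theta /thetas /phi /hd /Defs.half; by field.
Qed.

Section Ids.
Variables (p y z : F) (d : nat).
Let lam := theta p d.
Let mu := theta y d.
Let ph := phi p y z d.
Let ka := alpha (- p - 1) y z d.
Let de := delta_sc (- p - 1) y z d.

Lemma idT k : mu k - 2%:R * mu k.+1 + mu k.+2 - 2%:R = 0.
Proof. rewrite /mu /theta; ring. Qed.

Lemma idS k : mu k * (lam k + lam k.+1) + ph k
   - 2%:R * (lam k * mu k + mu k.+1 * lam k.+1 + ph k.+1) + (lam k + lam k.+1) * mu k.+1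
   + ph k.+2 - 2%:R * mu k - 2%:R * mu k.+1 + 2%:R * de - 2%:R * (lam k + lam k.+1) = 0.
Proof. rewrite /mu /lam /ph /de /delta_sc /theta /phi /hd /Defs.half; by field. Qed.

Lemma idQ k : ph k * (lam k.-1 - lam k - 2%:R) + ph k.+1 * (lam k.+1 - lam k - 2%:R)
   - 4%:R * mu k * lam k - 2%:R * ka + 2%:R * de * lam k - 2%:R * lam k ^+ 2 = 0.
Proof.
case: k => [|k] /=.
  rewrite /ph phi0 mul0r add0r.
  rewrite /mu /lam /ph /ka /de /alpha /delta_sc /theta /phi /hd /Defs.half; by field.
rewrite /mu /lam /ph /ka /de /alpha /delta_sc /theta /phi /hd /Defs.half; by field.
Qed.

Lemma idPP k : ph k * ((lam k.-1 - lam k) ^+ 2 - 2%:R * (lam k.-1 + lam k)) = 0.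
Proof.
case: k => [|k] /=; first by rewrite /ph phi0 mul0r.
rewrite /lam /ph /theta /phi /hd /Defs.half; by field.
Qed.

Lemma verma_inst X (Y : 'M[F]_d.+1) w :
  (forall v, relR X Y ka de v) ->
  Y *m w = mu 0 *: w ->
  Y *m W X lam w 1 = mu 1 *: W X lam w 1 + ph 1 *: w ->
  forall i, Y *m W X lam w i = mu i *: W X lam w i + ph i *: W X lam w i.-1.
Proof.
move=> hR h0 h1 i; apply: verma => //.
- exact: phi0.
- exact: idT.
- exact: idS.
- exact: idQ.
- exact: idPP.
Qed.
End Ids.
End Inst.

Section Fin.
Variable F : fieldType.
Hypothesis h2 : (2%:R : F) != 0.

Lemma ev_nz n j : (j < n.+1)%N -> ev F n j != 0.
Proof.
move=> hj; apply/eqP => h; have := congr1 (fun v : 'cV_n.+1 => v (inord j) 0) h.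
by rewrite !mxE inordK // eqxx => /eqP; rewrite oner_eq0.
Qed.

Lemma stable_AB (a b c : F) d (U : 'M[F]_d.+1) :
  (U *m (RdA a d)^T <= U)%MS -> (U *m (RdB a b c d)^T <= U)%MS ->
  racah_stable (Rd a b c d) U.
Proof.
move=> hA hB; split => //=.
  rewrite /RdC !linearB /= tr_scalar_mx mul_mx_scalar.
  by rewrite !sub_subB // scalemx_sub // submx_refl.
rewrite /RdD /mcomm linearZ linearB /= !trmx_mul; rewrite scalemxAR mulmxBr !mulmxA.
apply: scalemx_sub; apply: sub_subB.
  by apply: submx_trans hA; apply: submxMr.
by apply: submx_trans hB; apply: submxMr.
Qed.

Lemma image_unit n (M : racah_rep F n.+1) (Q : 'M[F]_n.+1) :
  racah_irreducible M -> Q != 0 -> racah_stable M Q^T -> Q \in unitmx.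
Proof.
case=> _ irr nz st; case: (irr _ st) => [r0|full].
  by move/eqP: r0; rewrite mxrank_tr mxrank_eq0 (negbTE nz).
by rewrite -unitmx_tr -row_full_unit.
Qed.

Lemma ker_stable n (P Xm Xn : 'M[F]_n.+1) :
  P *m Xm = Xn *m P -> (kermx P^T *m Xm^T <= kermx P^T)%MS.
Proof.
move=> h; rewrite sub_kermx -mulmxA -trmx_mul h trmx_mul mulmxA mulmx_ker mul0mx.
by [].
Qed.

Lemma kernel_unit n (M : racah_rep F n.+1) (P : 'M[F]_n.+1) :
  racah_irreducible M -> P != 0 -> racah_stable M (kermx P^T) -> P \in unitmx.
Proof.
case=> _ irr nz st; case: (irr _ st) => [r0|full].
  move: r0; rewrite mxrank_ker mxrank_tr => /eqP; rewrite subn_eq0 => hr.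
  rewrite -row_full_unit /row_full eqn_leq rank_leq_col /=.
  by [].
exfalso; move: full; rewrite /row_full mxrank_ker mxrank_tr => /eqP h.
have hle := rank_leq_col P.
have : \rank P = 0%N by lia.
by move/eqP; rewrite mxrank_eq0 (negbTE nz).
Qed.

Lemma iso_AB (a b c a' b' c' : F) d (P : 'M[F]_d.+1) :
  P \in unitmx -> P *m RdA a d = RdA a' d *m P ->
  P *m RdB a b c d = RdB a' b' c' d *m P ->
  delta_sc a b c d = delta_sc a' b' c' d ->
  racah_iso (Rd a b c d) (Rd a' b' c' d).
Proof.
move=> Pu hA hB hd; exists P; split=> //; split => //=.
  rewrite /RdC !mulmxBr !mulmxBl mul_mx_scalar mul_scalar_mx hA hB hd.
  by [].
have hAB : P *m (RdA a d *m RdB a b c d) = RdA a' d *m RdB a' b' c' d *m P.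
  by rewrite mulmxA hA -mulmxA hB mulmxA.
have hBA : P *m (RdB a b c d *m RdA a d) = RdB a' b' c' d *m RdA a' d *m P.
  by rewrite mulmxA hB -mulmxA hA mulmxA.
by rewrite /RdD /mcomm scalemxAR -scalemxAl mulmxBr mulmxBl hAB hBA.
Qed.

Lemma inv_inter n (Q Xm Xn : 'M[F]_n.+1) : Q \in unitmx ->
  Q *m Xm = Xn *m Q -> invmx Q *m Xn = Xm *m invmx Q.
Proof.
move=> Qu h.
rewrite -[invmx Q *m Xn]mulmx1 -(mulmxV Qu) !mulmxA -(mulmxA (invmx Q) Xn) -h.
by rewrite mulmxA mulVmx // mul1mx.
Qed.
End Fin.

Section Cases.
Variable F : fieldType.
Hypothesis h2 : (2%:R : F) != 0.

Lemma caseA (a b c : F) d : racah_irreducible (Rd a b c d) ->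
  racah_iso (Rd a b c d) (Rd (- a - 1) b c d).
Proof.
move=> irr.
pose X := RdA a d; pose Y := RdB a b c d.
pose lam := theta (- a - 1) d; pose w := ev F d 0.
have hR : forall v, relR X Y (alpha (- (- a - 1) - 1) b c d)
                     (delta_sc (- (- a - 1) - 1) b c d) v.
  have -> : - (- a - 1) - 1 = a by ring.
  move=> v; exact: (relA h2 a b c v).
have h0 : Y *m w = theta b d 0 *: w.
  by rewrite /Y RdB_up upmx_ev ?phi0 ?phiS // scale0r addr0.
have h1 : Y *m W X lam w 1 = theta b d 1 *: W X lam w 1
            + phi (- a - 1) b c d 1 *: w.
  rewrite /= /X /Y RdA_low RdB_up mulmxBr lowmx_ev scalemxAR.
  rewrite ?(mulmxDr, scalemxAR, lowmx_ev, upmx_ev _ _ (phi0 a b c d) (phiS a b c d)) /=.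
  apply/matrixP => r s; rewrite !mxE.
  rewrite /lam /theta /thetas /phi /hd /Defs.half; by field.
have hY := verma_inst h2 hR h0 h1.
have hlast : W X lam w d.+1 = 0.
  apply: W_last; rewrite /X RdA_low char_low; apply: prod_rev => i hi.
  rewrite /lam /theta natrB; last by rewrite -ltnS.
  rewrite /hd /Defs.half; by field.
pose Q := Qm X lam w.
have hQA : Q *m RdA (- a - 1) d = X *m Q := Qm_low hlast.
have hQB : Q *m RdB (- a - 1) b c d = Y *m Q.
  exact: (Qm_up (phi0 _ _ _ _) (phiS _ _ _ _) hY).
have Qnz : Q != 0 by apply: Qm_nz; exact: ev_nz.
have Qu : Q \in unitmx.
  apply: (image_unit irr Qnz); apply: stable_AB.
    by rewrite -trmx_mul -hQA trmx_mul submxMl.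
  by rewrite -trmx_mul -hQB trmx_mul submxMl.
apply: (@iso_AB _ _ _ _ _ _ _ _ (invmx Q)).
- by rewrite unitmx_inv.
- exact: inv_inter.
- exact: inv_inter.
- by rewrite /delta_sc; ring.
Qed.


Lemma h1B (a b b' c : F) d : b' = b \/ b' = - b - 1 ->
  RdA a d *m W (RdB a b' c d) (theta b d) (ev F d d) 1 =
  theta (- a - 1) d 1 *: W (RdB a b' c d) (theta b d) (ev F d d) 1
  + phi b (- a - 1) c d 1 *: ev F d d.
Proof.
move=> hb'.
rewrite /= RdA_low RdB_up mulmxBr upmx_ev ?phi0 ?phiS // scalemxAR.
rewrite ?(mulmxDr, scalemxAR, lowmx_ev) [ev _ _ d.+1]ev_out // ?addr0.
apply/matrixP => r s; rewrite !mxE.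
case: d r => [|d] r /=.
  rewrite [phi _ _ _ _ 0]phi0.
  by case: hb' => ->; rewrite /theta /thetas /phi /hd /Defs.half; field.
by case: hb' => ->; rewrite /theta /thetas /phi /hd /Defs.half; field.
Qed.

Lemma caseB (a b c : F) d : racah_irreducible (Rd a b c d) ->
  racah_iso (Rd a b c d) (Rd a (- b - 1) c d).
Proof.
move=> irr.
pose Y := RdA a d.
pose lam := theta b d; pose w := ev F d d.
pose MA := RdB b (- a - 1) c d; pose MB := RdA b d.
have h0 : Y *m w = theta (- a - 1) d 0 *: w.
  rewrite /Y RdA_low lowmx_ev [ev _ _ d.+1]ev_out // addr0; congr (_ *: _).
  rewrite /theta /hd /Defs.half; by field.
have key : forall b', b' = b \/ b' = - b - 1 ->
   exists Q : 'M[F]_d.+1, [/\ Q != 0, Q *m MA = Y *m Q & Q *m MB = RdB a b' c d *m Q].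
  move=> b' hb'.
  pose X := RdB a b' c d.
  have hR : forall v, relR X Y (alpha (- b - 1) (- a - 1) c d)
                     (delta_sc (- b - 1) (- a - 1) c d) v.
    move=> v; have := relB h2 a b' c v.
    have -> : - beta a b' c d = alpha (- b - 1) (- a - 1) c d.
      by case: hb' => ->; rewrite /beta /alpha; ring.
    have -> : delta_sc a b' c d = delta_sc (- b - 1) (- a - 1) c d.
      by case: hb' => ->; rewrite /delta_sc; ring.
    by [].
  have h1 := @h1B a b b' c d hb'.
  have hY := verma_inst h2 hR h0 h1.
  have hlast : W X lam w d.+1 = 0.
    apply: W_last; rewrite /X RdB_up char_up.
    case: hb' => -> //.
    apply: prod_rev => i hi.
    rewrite /lam /thetas /theta natrB; last by rewrite -ltnS.
    rewrite /hd /Defs.half; by field.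
  exists (Qm X lam w); split.
  - by apply: Qm_nz; exact: ev_nz.
  - exact: (Qm_up (phi0 _ _ _ _) (phiS _ _ _ _) hY).
  - exact: Qm_low hlast.
have [Q1 [Q1nz Q1A Q1B]] := key b (or_introl erefl).
have [Q2 [Q2nz Q2A Q2B]] := key (- b - 1) (or_intror erefl).
have Q1u : Q1 \in unitmx.
  apply: (image_unit irr Q1nz); apply: stable_AB.
    by rewrite -trmx_mul -Q1A trmx_mul submxMl.
  by rewrite -trmx_mul -Q1B trmx_mul submxMl.
pose P := Q2 *m invmx Q1.
have PA : P *m RdA a d = RdA a d *m P.
  by rewrite /P -mulmxA (inv_inter Q1u Q1A) mulmxA Q2A mulmxA.
have PB : P *m RdB a b c d = RdB a (- b - 1) c d *m P.
  by rewrite /P -mulmxA (inv_inter Q1u Q1B) mulmxA Q2B mulmxA.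
have Pnz : P != 0.
  apply: contraNneq Q2nz => P0.
  by rewrite -(mulmxKV Q1u Q2) -/P P0 mul0mx.
have Pu : P \in unitmx.
  apply: (kernel_unit h2 irr Pnz); apply: stable_AB.
    exact: ker_stable PA.
  exact: ker_stable PB.
apply: (iso_AB Pu PA PB).
by rewrite /delta_sc; ring.
Qed.

Lemma caseC (a b c : F) d :
  racah_iso (Rd a b c d) (Rd a b (- c - 1) d).
Proof.
have eB : RdB a b c d = RdB a b (- c - 1) d.
  apply/matrixP => i j; rewrite !mxE; congr (_ + _).
  by case: eqP => // _; rewrite /phi; ring.
apply: (@iso_AB _ _ _ _ _ _ _ _ 1%:M).
- exact: unitmx1.
- by rewrite mul1mx mulmx1.
- by rewrite mul1mx mulmx1 eB.
- by rewrite /delta_sc; ring.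
Qed.
End Cases.

End Aux.

Theorem theorem5p3 (F : closedFieldType) (char2 : (2%:R : F) != 0)
    (a b c : F) (d : nat) :
  racah_irreducible (Rd a b c d) ->
  [/\ racah_iso (Rd a b c d) (Rd (- a - 1) b c d),
      racah_iso (Rd a b c d) (Rd a (- b - 1) c d) &
      racah_iso (Rd a b c d) (Rd a b (- c - 1) d)].
Proof.
move=> irr; split.
- exact: (Aux.caseA char2 irr).
- exact: (Aux.caseB char2 irr).
- exact: Aux.caseC.
Qed.
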